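(* Let $V$ be a filled sparsity pattern, let $S\in\mathbb S^n_V$ have a positive definite completion, and let $i$ be a child of $j$ in the elimination tree. Let $E=E_{I_j,\,I_i\setminus\{j\}}$. Then $$E_{I_j^+I_i}=\begin{bmatrix}1&0\\0&E\end{bmatrix}.$$ Suppose $S_{I_jI_j}=R_jR_j^T$ with $R_j$ upper triangular and nonsingular, and suppose $E^TR_j=RQ^T$ where $R$ is a square upper triangular matrix of order $|I_i|-1$ and $Q$ has orthonormal columns. Put $b=E^TS_{I_j j}$. Then $R$ is nonsingular, $S_{jj}-\|R^{-1}b\|_2^2>0$, and $S_{I_iI_i}=R_iR_i^T$ where $$R_i=\begin{bmatrix}\big(S_{jj}-\|R^{-1}b\|_2^2\big)^{1/2}&(R^{-1}b)^T\\ 0&R\end{bmatrix}.$$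
   Context: A symmetric sparsity pattern $V$ is a set of pairs $(i,j)$ with $1\le j\le i\le n$ containing all $(i,i)$; it is filled (chordal) if $i>j>k$, $(i,k)\in V$, $(j,k)\in V$ imply $(i,j)\in V$. $\mathbb S^n_V$ is the set of real symmetric $n\times n$ matrices with $X_{ij}=X_{ji}=0$ whenever $i\ge j$ and $(i,j)\notin V$. $S$ has a positive definite completion if there is a positive definite symmetric $Z$ with $Z_{ij}=S_{ij}$ for all $(i,j)\in V$. For each $j$, $I_j=\{i>j:(i,j)\in V\}$, $I_j^+=\{j\}\cup I_j$. Elimination tree: the parent of $j$ is $\min I_j$ if $I_j\ne\emptyset$; it is known that $I_i\subseteq I_j^+$ if $i$ is a child of $j$. Index sets are sorted increasingly, $I(a)$ being the $a$-th element; for $J\subseteq I$, $E_{IJ}$ is the $|I|\times|J|$ matrix with $(E_{IJ})_{ab}=1$ iff $I(a)=J(b)$, else $0$. $A_{IJ}$ denotes the submatrix of $A$ with rows $I$ and columns $J$, and $A_{Ij}$ the part of column $j$ with rows in $I$. *)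

(* Defs.v *)
(* Indices are 0-based: 'I_n = {0,...,n-1}. *)
From HB Require Import structures.
From mathcomp Require Import all_boot all_order all_algebra.
Set Implicit Arguments. Unset Strict Implicit. Unset Printing Implicit Defensive.
Import Order.TTheory GRing.Theory Num.Theory.
Local Open Scope ring_scope.

Section Defs.
Variable n : nat.

(* A symmetric sparsity pattern: V i j stands for (i,j) in V; j <= i, diagonal included. *)
Definition sparsity_pattern (V : rel 'I_n) : Prop :=
  (forall i j : 'I_n, V i j -> (j <= i)%N) /\ (forall i : 'I_n, V i i).

Definition filled (V : rel 'I_n) : Prop :=
  forall i j k : 'I_n, (j < i)%N -> (k < j)%N -> V i k -> V j k -> V i j.

Definition Iset (V : rel 'I_n) (j : 'I_n) : {set 'I_n} :=
  [set i : 'I_n | (j < i)%N && V i j].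

Definition Iplus (V : rel 'I_n) (j : 'I_n) : {set 'I_n} := j |: Iset V j.

Definition etree_child (V : rel 'I_n) (i j : 'I_n) : Prop :=
  j \in Iset V i /\ (forall k, k \in Iset V i -> (j <= k)%N).

(* I(a): the a-th element (0-based) of the increasingly sorted index set I *)
Definition idx (I : {set 'I_n}) (a : 'I_#|I|) : 'I_n := @enum_val _ (mem I) a.

Variable R : rcfType.

Definition in_SV (V : rel 'I_n) (S : 'M[R]_n) : Prop :=
  S^T = S /\ (forall i j : 'I_n, (j <= i)%N -> ~~ V i j -> S i j = 0 /\ S j i = 0).

Definition posdef (Z : 'M[R]_n) : Prop :=
  Z^T = Z /\ (forall x : 'cV[R]_n, x != 0 -> 0 < (x^T *m Z *m x) 0 0).

Definition has_pd_completion (V : rel 'I_n) (S : 'M[R]_n) : Prop :=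
  exists Z : 'M[R]_n, posdef Z /\ (forall i j : 'I_n, V i j -> Z i j = S i j).

Definition subM (A : 'M[R]_n) (I J : {set 'I_n}) : 'M[R]_(#|I|, #|J|) :=
  \matrix_(a < #|I|, b < #|J|) A (idx a) (idx b).

Definition subcol (A : 'M[R]_n) (I : {set 'I_n}) (j : 'I_n) : 'cV[R]_#|I| :=
  \col_(a < #|I|) A (idx a) j.

Definition Emx (I J : {set 'I_n}) : 'M[R]_(#|I|, #|J|) :=
  \matrix_(a < #|I|, b < #|J|) (idx a == idx b)%:R.

End Defs.

Definition upper_tri (R : rcfType) (m : nat) (A : 'M[R]_m) : Prop :=
  forall a b : 'I_m, (b < a)%N -> A a b = 0.

Definition norm2sq (R : rcfType) (m : nat) (v : 'cV[R]_m) : R :=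
  \sum_(k < m) v k 0 ^+ 2.

(* Main.v *)
Require Import Defs.
From HB Require Import structures.
From mathcomp Require Import all_boot all_order all_algebra.
Import Order.TTheory GRing.Theory Num.Theory.
Local Open Scope ring_scope.


Section Idx.
Variable n : nat.

Lemma sorted_enum_set (A : {set 'I_n}) :
  sorted (fun a b : 'I_n => (a < b)%N) (enum A).
Proof.
apply: sorted_filter; first by move=> a b c /= ; apply: ltn_trans.
rewrite -enumT; have := iota_ltn_sorted 0 n; rewrite -val_enum_ord sorted_map; exact.
Qed.

Lemma enum_U1 (A : {set 'I_n}) (x : 'I_n) :
  (forall y, y \in A -> (x < y)%N) -> enum (x |: A) = x :: enum A.
Proof.
move=> hmin; apply: (@irr_sorted_eq _ (fun a b : 'I_n => (a < b)%N)).
- by move=> a b c /=; apply: ltn_trans.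
- by move=> a /=; rewrite ltnn.
- exact: sorted_enum_set.
- rewrite /= path_sortedE; last by move=> a b c /=; apply: ltn_trans.
  rewrite sorted_enum_set andbT; apply/allP => y; rewrite mem_enum; exact: hmin.
- by move=> y; rewrite inE !mem_enum !inE.
Qed.

Lemma idx_U1_0 (I A : {set 'I_n}) (x : 'I_n) (hI : I = x |: A)
  (hmin : forall y, y \in A -> (x < y)%N) (k : 'I_#|I|) :
  nat_of_ord k = 0%N -> idx k = x.
Proof.
subst I => hk; by rewrite /idx (enum_val_nth x) enum_U1 // hk.
Qed.

Lemma idx_U1_S (I A : {set 'I_n}) (x : 'I_n) (hI : I = x |: A)
  (hmin : forall y, y \in A -> (x < y)%N) (k : 'I_#|I|) (k' : 'I_#|A|) :
  nat_of_ord k = k'.+1 -> idx k = idx k'.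
Proof.
subst I => hk; rewrite /idx (enum_val_nth x) enum_U1 // hk /=.
by rewrite (enum_val_nth x).
Qed.

Lemma idx_in (I : {set 'I_n}) (k : 'I_#|I|) : idx k \in I.
Proof. exact: enum_valP. Qed.

Lemma idx_inj (I : {set 'I_n}) : injective (@idx n I).
Proof. exact: enum_val_inj. Qed.

Lemma sel_eq (A : {set 'I_n}) y (hy : y \in A) (k : 'I_#|A|) :
  (idx k == y) = (k == enum_rank_in hy y).
Proof.
apply/eqP/eqP => [h|->]; first by have := enum_valK_in hy k; rewrite /idx in h *; rewrite h.
by rewrite /idx enum_rankK_in.
Qed.
End Idx.

Lemma sum_delta (R : rcfType) (p : nat) (k0 : 'I_p) (f : 'I_p -> R) :
  \sum_k (k == k0)%:R * f k = f k0.
Proof.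
rewrite (bigD1 k0) //= eqxx mul1r big1 ?addr0 // => k /negbTE ->; by rewrite mul0r.
Qed.

Lemma sum_deltar (R : rcfType) (p : nat) (k0 : 'I_p) (f : 'I_p -> R) :
  \sum_k f k * (k == k0)%:R = f k0.
Proof.
rewrite -[RHS](@sum_delta R p k0); apply: eq_bigr => k _; by rewrite mulrC.
Qed.


Section Mx.
Variable R : rcfType.

Lemma posdef_cast k k' (e : k = k') (N : 'M[R]_k) :
  (forall x : 'cV_k, x != 0 -> 0 < (x^T *m N *m x) 0 0) ->
  forall x : 'cV_k', x != 0 -> 0 < (x^T *m castmx (e,e) N *m x) 0 0.
Proof. by case: k' / e; rewrite castmx_id. Qed.

Lemma posdef_sub n (Z : 'M[R]_n) (I : {set 'I_n}) : posdef Z ->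
  forall x : 'cV_#|I|, x != 0 -> 0 < (x^T *m subM Z I I *m x) 0 0.
Proof.
move=> [_ hZ] x hx.
pose P := \matrix_(k < n, a < #|I|) ((k == idx a)%:R : R).
have hs : subM Z I I = P^T *m Z *m P.
  apply/matrixP => a c; rewrite !mxE.
  under eq_bigr => l _ do rewrite [P l c]mxE.
  rewrite sum_deltar mxE.
  under eq_bigr => l _ do rewrite !mxE.
  by rewrite sum_delta.
have hPP : P^T *m P = 1%:M.
  apply/matrixP => a c; rewrite !mxE.
  under eq_bigr => l _ do rewrite !mxE.
  by rewrite sum_delta (inj_eq (@idx_inj _ _)).
have hPx : P *m x != 0.
  by apply: contraNneq hx => h; rewrite -[x]mul1mx -hPP -mulmxA h mulmx0.
have := hZ _ hPx; rewrite hs trmx_mul !mulmxA //.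
Qed.

Lemma factor_ok m (s : R) (b : 'cV[R]_m) (Rm : 'M[R]_m) :
  Rm \in unitmx ->
  0 <= s - norm2sq (invmx Rm *m b) ->
  block_mx (Num.sqrt (s - norm2sq (invmx Rm *m b)))%:M (invmx Rm *m b)^T 0 Rm
  *m (block_mx (Num.sqrt (s - norm2sq (invmx Rm *m b)))%:M (invmx Rm *m b)^T 0 Rm)^T
   = block_mx s%:M b^T b (Rm *m Rm^T).
Proof.
move=> hu.
set w := invmx Rm *m b; set d := s - norm2sq w => hd.
have hRw : Rm *m w = b by rewrite /w mulKVmx.
rewrite tr_block_mx mulmx_block !trmx0 trmxK tr_scalar_mx !mulmx0 !mul0mx ?addr0 ?add0r.
rewrite -trmx_mul hRw; congr block_mx.
apply/matrixP => a c; rewrite !ord1 !mxE big_ord1 !mxE /= !mulr1n.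
rewrite -expr2 sqr_sqrtr // /d /norm2sq.
under [X in _ + X]eq_bigr => k _ do rewrite mxE -expr2.
by rewrite subrK.
Qed.

Lemma schur_pos m (s : R) (b : 'cV[R]_m) (Rm : 'M[R]_m) :
  Rm \in unitmx ->
  (forall x : 'cV_(1 + m), x != 0 ->
     0 < (x^T *m block_mx s%:M b^T b (Rm *m Rm^T) *m x) 0 0) ->
  0 < s - norm2sq (invmx Rm *m b).
Proof.
move=> hu hM.
set w := invmx Rm *m b.
have hRw : Rm *m w = b by rewrite /w mulKVmx.
set x := col_mx (1%:M : 'M[R]_1) (- ((invmx Rm)^T *m w)).
have hx : x != 0.
  apply/eqP => /matrixP /(_ 0 0); rewrite /x mxE.
  case: splitP => [a _|a]; last by case: a.
  by rewrite !ord1 !mxE /= => /eqP; rewrite oner_eq0.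
have := hM x hx.
rewrite /x tr_col_mx -mulmxA mul_block_col mul_row_col.
have -> : b *m 1%:M + Rm *m Rm^T *m - ((invmx Rm)^T *m w) = 0.
  rewrite mulmx1 mulmxN -!mulmxA (mulmxA Rm^T) -trmx_mul mulVmx // trmx1 mul1mx.
  by rewrite hRw subrr.
rewrite mulmx0 addr0 trmx1 mul1mx mulmx1 mulmxN mulmxA -trmx_mul -/w.
rewrite !mxE /norm2sq mulr1n.
under eq_bigr => k _ do rewrite mxE -expr2.
done.
Qed.
End Mx.


Theorem mainTheorem4 (R : rcfType) (n : nat) (V : rel 'I_n) (S : 'M[R]_n)
  (i j : 'I_n)
  (HV : sparsity_pattern V) (Hfill : filled V)
  (HS : in_SV V S) (Hpd : has_pd_completion V S)
  (Hchild : etree_child V i j)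
  (Rj : 'M[R]_#|Iset V j|) (Rm : 'M[R]_#|Iset V i :\ j|)
  (Q : 'M[R]_(#|Iset V j|, #|Iset V i :\ j|))
  (HRj_up : upper_tri Rj) (HRj_ns : Rj \in unitmx)
  (HSRj : subM S (Iset V j) (Iset V j) = Rj *m Rj^T)
  (HR_up : upper_tri Rm)
  (HQ : Q^T *m Q = 1%:M)
  (HRQ : (Emx R (Iset V j) (Iset V i :\ j))^T *m Rj = Rm *m Q^T) :
  let E := Emx R (Iset V j) (Iset V i :\ j) in
  let b := E^T *m subcol S (Iset V j) j in
  let d := S j j - norm2sq (invmx Rm *m b) in
  let Ri := block_mx (Num.sqrt d)%:M (invmx Rm *m b)^T 0 Rm in
  (exists (e1 : #|Iplus V j| = (1 + #|Iset V j|)%N)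
          (e2 : #|Iset V i| = (1 + #|Iset V i :\ j|)%N),
      castmx (e1, e2) (Emx R (Iplus V j) (Iset V i)) = block_mx 1%:M 0 0 E)
  /\ Rm \in unitmx
  /\ 0 < d
  /\ (exists e : #|Iset V i| = (1 + #|Iset V i :\ j|)%N,
      castmx (e, e) (subM S (Iset V i) (Iset V i)) = Ri *m Ri^T).
Proof.
move=> E b d Ri.
have [hjIi hmin] := Hchild.
have [HVle HVd] := HV.
have [Z [[Zsym hZ] hZS]] := Hpd.
have jnIj : j \notin Iset V j by rewrite inE ltnn.
have Ij_gt : forall y, y \in Iset V j -> (j < y)%N by move=> y; rewrite inE => /andP[].
have [ij Vji] : (i < j)%N /\ V j i by move: hjIi; rewrite inE => /andP[].
have parent : forall y, y \in Iset V i :\ j -> y \in Iset V j.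
  move=> y; rewrite !inE => /andP[ynj /andP[iy Vyi]].
  have jy : (j < y)%N.
    have := hmin y; rewrite inE iy Vyi => /(_ isT); rewrite leq_eqVlt => /orP[/eqP h|//].
    by move: ynj; rewrite (val_inj h) eqxx.
  by rewrite jy; apply: Hfill jy ij Vyi Vji.
have Iim_gt : forall y, y \in Iset V i :\ j -> (j < y)%N.
  by move=> y h; apply: Ij_gt; apply: parent.
have hIi : Iset V i = j |: (Iset V i :\ j) by rewrite setD1K.
have e1 : #|Iplus V j| = (1 + #|Iset V j|)%N by rewrite /Iplus cardsU1 jnIj.
have e2 : #|Iset V i| = (1 + #|Iset V i :\ j|)%N by rewrite (cardsD1 j) hjIi.
have Ssym : forall u v, S u v = S v u by move=> u v; rewrite -[in LHS]HS.1 mxE.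
have inIi : forall y, y \in Iset V i :\ j -> y \in Iset V i.
  by move=> y /setD1P[].
have VZ : forall u v, u \in Iset V i -> v \in Iset V i -> (v < u)%N -> V u v.
  move=> u v hu hv vu.
  have hu' : u \in Iset V i :\ j.
    rewrite in_setD1 hu andbT; apply/eqP => uj; move: vu; rewrite uj ltnNge.
    by rewrite (hmin v hv).
  have := parent u hu'; rewrite inE => /andP[ju Vuj].
  case: (eqVneq v j) => [->//|vj].
  have hv' : v \in Iset V i :\ j by rewrite in_setD1 hv vj.
  have := parent v hv'; rewrite inE => /andP[jv Vvj].
  exact: Hfill vu jv Vuj Vvj.
have Zeq : forall u v, u \in Iset V i -> v \in Iset V i -> Z u v = S u v.
  move=> u v hu hv; case: (ltngtP u v) => [uv|vu|/val_inj ->].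
  - by rewrite -[in LHS]Zsym mxE hZS 1?Ssym //; apply: VZ.
  - by rewrite hZS //; apply: VZ.
  - by rewrite hZS.
have sel : forall (k : 'I_#|Iset V j|) (a : 'I_#|Iset V i :\ j|),
    E k a = (k == enum_rank_in (parent _ (@idx_in _ _ a)) (idx a))%:R.
  by move=> k a; rewrite /E mxE (@sel_eq _ _ _ (parent _ (@idx_in _ _ a))).
have hb : forall a, b a 0 = S (idx a) j.
  move=> a; rewrite /b mxE.
  under eq_bigr => k _ do rewrite mxE sel.
  by rewrite sum_delta mxE /idx enum_rankK_in //; exact: (parent _ (@idx_in _ _ a)).
have hC : E^T *m subM S (Iset V j) (Iset V j) *m E = subM S (Iset V i :\ j) (Iset V i :\ j).
  apply/matrixP => a c; rewrite mxE.
  under eq_bigr => l _ do rewrite sel.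
  rewrite sum_deltar mxE.
  under eq_bigr => k _ do rewrite mxE sel.
  by rewrite sum_delta !mxE /idx !enum_rankK_in //; [exact: (parent _ (@idx_in _ _ c)) | exact: (parent _ (@idx_in _ _ a))].
have hRR : Rm *m Rm^T = subM S (Iset V i :\ j) (Iset V i :\ j).
  rewrite -hC HSRj.
  have -> : Rm *m Rm^T = (Rm *m Q^T) *m (Rm *m Q^T)^T.
    by rewrite trmx_mul trmxK mulmxA -(mulmxA Rm) HQ mulmx1.
  by rewrite -HRQ trmx_mul trmxK !mulmxA.
have hSZ : forall I : {set 'I_n}, I \subset Iset V i -> subM S I I = subM Z I I.
  move=> I /subsetP hI; apply/matrixP => a c; rewrite !mxE Zeq //; apply: hI; exact: (@idx_in _ _).
have hCpd : forall x : 'cV[R]_#|Iset V i :\ j|, x != 0 -> 0 < (x^T *m subM S (Iset V i :\ j) (Iset V i :\ j) *m x) 0 0.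
  rewrite hSZ; last by apply/subsetP.
  exact: (@posdef_sub R n Z _ (conj Zsym hZ)).
have hu : Rm \in unitmx.
  case hu: (Rm \in unitmx) => //.
  have : kermx Rm != 0 by rewrite kermx_eq0 row_free_unit hu.
  case/rowV0Pn => v /sub_kermxP hv v0.
  have := hCpd v^T; rewrite trmx_eq0 => /(_ v0).
  by rewrite -hRR trmxK !mulmxA hv !mul0mx mxE ltxx.
have ii0 : forall k : 'I_#|Iset V i|, nat_of_ord k = 0%N -> idx k = j.
  exact: (@idx_U1_0 n (Iset V i) (Iset V i :\ j) j hIi Iim_gt).
have iiS : forall (k : 'I_#|Iset V i|) (k' : 'I_#|Iset V i :\ j|),
    nat_of_ord k = k'.+1 -> idx k = idx k'.
  exact: (@idx_U1_S n (Iset V i) (Iset V i :\ j) j hIi Iim_gt).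
have pp0 : forall k : 'I_#|Iplus V j|, nat_of_ord k = 0%N -> idx k = j.
  exact: (@idx_U1_0 n (Iplus V j) (Iset V j) j erefl Ij_gt).
have ppS : forall (k : 'I_#|Iplus V j|) (k' : 'I_#|Iset V j|),
    nat_of_ord k = k'.+1 -> idx k = idx k'.
  exact: (@idx_U1_S n (Iplus V j) (Iset V j) j erefl Ij_gt).
have hM : castmx (e2, e2) (subM S (Iset V i) (Iset V i)) =
    block_mx (S j j)%:M b^T b (subM S (Iset V i :\ j) (Iset V i :\ j)).
  apply/matrixP => a c; rewrite castmxE mxE.
  rewrite -[a]splitK -[c]splitK; case: (split a) => a'; case: (split c) => c' /=.
  - rewrite block_mxEul !ii0 /=; last 2 first.
      by rewrite /= ord1. by rewrite /= ord1.
    by rewrite !ord1 mxE mulr1n.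
  - rewrite block_mxEur ii0 /=; last by rewrite /= ord1.
    rewrite (iiS _ c'); last by rewrite /= add1n.
    by rewrite mxE ord1 hb Ssym.
  - rewrite block_mxEdl [idx (cast_ord _ (lshift _ _))]ii0 /=; last by rewrite /= ord1.
    rewrite (iiS _ a'); last by rewrite /= add1n.
    by rewrite ord1 hb.
  - rewrite block_mxEdr (iiS (cast_ord _ (rshift _ a')) a'); last by rewrite /= add1n.
    rewrite (iiS _ c'); last by rewrite /= add1n.
    by rewrite mxE.
have jn : forall c' : 'I_#|Iset V i :\ j|, (j == idx c') = false.
  move=> c'; apply/negbTE; rewrite eq_sym.
  by have := @idx_in _ _ c'; rewrite in_setD1 => /andP[].
have jn' : forall a' : 'I_#|Iset V j|, (idx a' == j) = false.
  move=> a'; apply/negbTE; apply: contraNneq jnIj => h; rewrite -[X in X \in _]h; exact: (@idx_in _ _ a').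
have hE : castmx (e1, e2) (Emx R (Iplus V j) (Iset V i)) = block_mx 1%:M 0 0 E.
  apply/matrixP => a c; rewrite castmxE mxE.
  rewrite -[a]splitK -[c]splitK; case: (split a) => a'; case: (split c) => c' /=.
  - rewrite block_mxEul pp0 ?ii0 /=; last 2 first.
      by rewrite /= ord1. by rewrite /= ord1.
    by rewrite !ord1 mxE eqxx.
  - rewrite block_mxEur pp0 /=; last by rewrite /= ord1.
    rewrite (iiS _ c'); last by rewrite /= add1n.
    by rewrite mxE jn.
  - rewrite block_mxEdl ii0 /=; last by rewrite /= ord1.
    rewrite (ppS _ a'); last by rewrite /= add1n.
    by rewrite mxE jn'.
  - rewrite block_mxEdr (ppS _ a'); last by rewrite /= add1n.
    rewrite (iiS _ c'); last by rewrite /= add1n.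
    by rewrite /E mxE.
have hMpd : forall x : 'cV[R]_(1 + #|Iset V i :\ j|), x != 0 ->
    0 < (x^T *m block_mx (S j j)%:M b^T b (Rm *m Rm^T) *m x) 0 0.
  rewrite hRR -hM; apply: posdef_cast.
  rewrite hSZ //; exact: (@posdef_sub R n Z _ (conj Zsym hZ)).
have hd : 0 < d by apply: schur_pos.
split; first by exists e1, e2.
split=> //; split=> //.
exists e2; rewrite hM -hRR /Ri /d; symmetry; apply: factor_ok => //.
exact: ltW.
Qed.
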